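(* For every $n\ge 2$ there exists an update sequence of width $3$ in which $n$ points arrive on which every deterministic strict online embedding into HSTs has distortion at least $2^{n-2}$.
   Context: For $\mu\ge1$, a $\mu$-HST is the metric on the leaves of a rooted tree with node weights $\varphi\ge0$ ($\varphi(v)=0$ iff $v$ is a leaf, $\varphi(v)\le\varphi(u)/\mu$ when $v$ is a child of $u$), leaf distance $\varphi(\mathrm{lca}(u,v))$; ''HSTs'' is the family of such metrics. An update sequence on a metric $(X,d)$ is a sequence $(v_t,o_t)\in X\times\{+,-\}$ ($v_t$ arrives if $o_t=+$, leaves if $o_t=-$) with alive sets $L_0=\varnothing$, $L_t=L_{t-1}\cup\{v_t\}$ or $L_{t-1}\setminus\{v_t\}$; its width is $\max_t|L_t|$. A deterministic strict online embedding into HSTs outputs after $\sigma_t$ (depending only on $\sigma_1,\dots,\sigma_t$, the sequence being possibly chosen adaptively against the deterministic embedding) an HST metric $d_t$ on $L_t$ with $d_t(u,v)=d_{t-1}(u,v)$ for all $u,v\in L_{t-1}\cap L_t$. Its distortion is the least $\lambda$ for which there is $c>0$ with $d(u,v)\le c\,d_t(u,v)\le\lambda d(u,v)$ for all $t$ and $u,v\in L_t$. *)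

(* Defs.v *)
From Stdlib Require Import Reals List.
Import ListNotations.
Open Scope R_scope.

Set Implicit Arguments.

Section Defs.
Variable X : Type.

Definition is_metric (d : X -> X -> R) : Prop :=
  (forall x, d x x = 0) /\
  (forall x y, d x y = 0 -> x = y) /\
  (forall x y, d x y = d y x) /\
  (forall x y z, d x z <= d x y + d y z).

Inductive hst : Type :=
| Leaf : X -> hst
| Node : R -> list hst -> hst.

Definition weight (t : hst) : R :=
  match t with Leaf _ => 0 | Node w _ => w end.

Fixpoint leaves (t : hst) : list X :=
  match t with
  | Leaf x => [x]
  | Node _ cs => flat_map leaves cs
  end.

(* mu-HST weight conditions: phi(v) = 0 iff v is a leaf (internal nodes have
   at least one child and positive weight), and phi(child) <= phi(parent)/mu. *)
Inductive wf_hst (mu : R) : hst -> Prop :=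
| wf_leaf x : wf_hst mu (Leaf x)
| wf_node w cs :
    0 < w -> cs <> [] ->
    (forall c, In c cs -> weight c <= w / mu /\ wf_hst mu c) ->
    wf_hst mu (Node w cs).

(* lca_w t u v r : r is the weight of the least common ancestor of leaves u, v. *)
Inductive lca_w : hst -> X -> X -> R -> Prop :=
| lca_leaf x : lca_w (Leaf x) x x 0
| lca_here w cs u v i j ci cj :
    i <> j -> nth_error cs i = Some ci -> nth_error cs j = Some cj ->
    In u (leaves ci) -> In v (leaves cj) ->
    lca_w (Node w cs) u v w
| lca_down w cs c u v r :
    In c cs -> lca_w c u v r -> lca_w (Node w cs) u v r.

(* D restricted to the set P is an HST metric (the empty set is trivially one). *)
Definition is_hst_metric_on (P : X -> Prop) (D : X -> X -> R) : Prop :=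
  (forall x, ~ P x) \/
  exists (mu : R) (t : hst),
    1 <= mu /\ wf_hst mu t /\ NoDup (leaves t) /\
    (forall x, In x (leaves t) <-> P x) /\
    (forall u v, P u -> P v -> lca_w t u v (D u v)).

(* Update sequences: (v, true) = arrival "+", (v, false) = departure "-". *)
Fixpoint alive_rev (r : list (X * bool)) (x : X) : Prop :=
  match r with
  | [] => False
  | (v, true) :: r' => x = v \/ alive_rev r' x
  | (v, false) :: r' => x <> v /\ alive_rev r' x
  end.

(* alive s x  <->  x belongs to L_t where s = sigma_1 ... sigma_t. *)
Definition alive (s : list (X * bool)) (x : X) : Prop := alive_rev (rev s) x.

Definition width_le (sigma : list (X * bool)) (k : nat) : Prop :=
  forall t (l : list X), NoDup l -> (forall x, In x l -> alive (firstn t sigma) x) ->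
    (length l <= k)%nat.

Definition n_points_arrive (sigma : list (X * bool)) (n : nat) : Prop :=
  let arr := map fst (filter (fun e => snd e) sigma) in
  length arr = n /\ NoDup arr.

(* A deterministic online embedding: after the prefix s it outputs A s,
   a function on pairs of points (only its values on L_t matter). *)
Definition strict_online_hst_embedding (A : list (X * bool) -> X -> X -> R) : Prop :=
  (forall s, is_hst_metric_on (alive s) (A s)) /\
  (forall s e u v, alive s u -> alive s v ->
     alive (s ++ [e]) u -> alive (s ++ [e]) v ->
     A (s ++ [e]) u v = A s u v).

(* "distortion of A on sigma is at least lam0": every admissible (c, lam) has lam >= lam0. *)
Definition distortion_ge (d : X -> X -> R) (A : list (X * bool) -> X -> X -> R)
    (sigma : list (X * bool)) (lam0 : R) : Prop :=
  forall c lam, 0 < c ->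
    (forall t u v, alive (firstn t sigma) u -> alive (firstn t sigma) v ->
       d u v <= c * A (firstn t sigma) u v /\ c * A (firstn t sigma) u v <= lam * d u v) ->
    lam0 <= lam.

End Defs.

(* Main.v *)
Require Import Defs.
From Stdlib Require Import Reals List Lia Lra Classical.
Import ListNotations.
Open Scope R_scope.

Set Implicit Arguments. Unset Strict Implicit.
Section Tree.
Variable X : Type.

Lemma nodup_app_disj (l1 l2 : list X) x :
  NoDup (l1 ++ l2) -> In x l1 -> In x l2 -> False.
Proof.
  induction l1 as [|a l1 IH]; simpl; intros H H1 H2; [easy|].
  inversion H as [|? ? Hna]; subst. destruct H1 as [<-|H1].
  - apply Hna. apply in_or_app. auto.
  - eauto.
Qed.

Lemma index_uniq (cs : list (hst X)) : forall i k ci ck x,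
  NoDup (flat_map (@leaves X) cs) -> nth_error cs i = Some ci ->
  nth_error cs k = Some ck -> In x (leaves ci) -> In x (leaves ck) -> i = k.
Proof.
  induction cs as [|a cs IH]; intros [|i] [|k] ci ck x HN Hi Hk Hx1 Hx2;
    simpl in *; try discriminate; auto.
  - injection Hi as <-. exfalso. apply (nodup_app_disj (x:=x) HN); auto.
    apply in_flat_map. exists ck. split; auto. eapply nth_error_In; eauto.
  - injection Hk as <-. exfalso. apply (nodup_app_disj (x:=x) HN); auto.
    apply in_flat_map. exists ci. split; auto. eapply nth_error_In; eauto.
  - f_equal. eapply IH; eauto. eapply NoDup_app_remove_l; eauto.
Qed.

Lemma nodup_child (cs : list (hst X)) c :
  NoDup (flat_map (@leaves X) cs) -> In c cs -> NoDup (leaves c).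
Proof.
  induction cs as [|a cs IH]; simpl; intros H Hc; [easy|]. destruct Hc as [<-|Hc].
  - eapply NoDup_app_remove_r; eauto.
  - apply IH; auto. eapply NoDup_app_remove_l; eauto.
Qed.

Lemma lca_in (t : hst X) u v r : lca_w t u v r -> In u (leaves t) /\ In v (leaves t).
Proof.
  induction 1; simpl.
  - auto.
  - split; apply in_flat_map; eexists; split; eauto; eapply nth_error_In; eauto.
  - destruct IHlca_w. split; apply in_flat_map; eauto.
Qed.

Lemma lca_bounds mu (t : hst X) u v r : 1 <= mu -> wf_hst mu t -> lca_w t u v r ->
  0 <= r <= weight t.
Proof.
  intros Hmu Hwf H. revert Hwf. induction H; intros Hwf; simpl.
  - lra.
  - inversion Hwf; subst. lra.
  - inversion Hwf; subst. destruct (H5 c H) as [Hc1 Hc2].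
    destruct (IHlca_w Hc2).
    assert (/mu <= 1) by (rewrite <- Rinv_1; apply Rinv_le_contravar; lra).
    assert (w / mu <= w) by (unfold Rdiv; rewrite <- (Rmult_1_r w) at 2;
      apply Rmult_le_compat_l; lra).
    lra.
Qed.

Lemma inv_node W (cs : list (hst X)) u w r k c :
  NoDup (flat_map (@leaves X) cs) -> lca_w (Node W cs) u w r ->
  nth_error cs k = Some c -> In u (leaves c) ->
  (In w (leaves c) -> lca_w c u w r) /\ (~ In w (leaves c) -> r = W).
Proof.
  intros HN H Hk Hu.
  inversion H as [ | ? ? ? ? i j ci cj Hij Hi Hj Hui Hvj | ? ? c0 ? ? ? Hc0 Hl]; subst.
  - assert (i = k) by (eapply index_uniq; eauto). subst.
    split; auto. intros Hw. exfalso. apply Hij.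
    eapply index_uniq; [eauto|exact Hk|exact Hj|eauto|eauto].
  - destruct (In_nth_error _ _ Hc0) as [k0 Hk0].
    destruct (lca_in Hl) as [Hu0 Hw0].
    assert (k0 = k) by (eapply index_uniq; [eauto|exact Hk0|exact Hk|exact Hu0|exact Hu]). subst.
    rewrite Hk in Hk0. injection Hk0 as <-. split; auto. intros; contradiction.
Qed.

Lemma ultra (t : hst X) u v r1 : lca_w t u v r1 -> forall mu w r2 r3, 1 <= mu ->
  wf_hst mu t -> NoDup (leaves t) -> lca_w t u w r2 -> lca_w t w v r3 ->
  r1 <= Rmax r2 r3.
Proof.
  induction 1 as [x | W cs u v i j ci cj Hij Hi Hj Hu Hv | W cs c u v r Hc Hl IH];
    intros mu w' r2 r3 Hmu Hwf HN G2 G3.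
  - destruct (lca_bounds Hmu Hwf G2). eapply Rle_trans; [|apply Rmax_l]. lra.
  - simpl in HN. destruct (lca_in G2) as [_ Hw].
    simpl in Hw. apply in_flat_map in Hw. destruct Hw as [ck [Hck Hw]].
    destruct (In_nth_error _ _ Hck) as [k Hk].
    destruct (Nat.eq_dec k i).
    + subst k. rewrite Hi in Hk. injection Hk as Hk. subst ck.
      assert (Hnv : ~ In v (leaves ci)).
      { intro. apply Hij. eapply index_uniq; [exact HN|exact Hi|exact Hj|eauto|eauto]. }
      destruct (inv_node HN G3 Hi Hw) as [_ E]. rewrite (E Hnv). apply Rmax_r.
    + assert (Hnw : ~ In w' (leaves ci)).
      { intro. apply n. eapply index_uniq; [exact HN|exact Hk|exact Hi|eauto|eauto]. }
      destruct (inv_node HN G2 Hi Hu) as [_ E]. rewrite (E Hnw). apply Rmax_l.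
  - simpl in HN. destruct (In_nth_error _ _ Hc) as [k Hk].
    destruct (lca_in Hl) as [Hu Hv].
    inversion Hwf as [|? ? ? ? Hall]; subst. destruct (Hall c Hc) as [Hc1 Hc2].
    destruct (classic (In w' (leaves c))) as [Hw|Hw].
    + destruct (inv_node HN G2 Hk Hu) as [E _].
      destruct (inv_node HN G3 Hk Hw) as [E' _].
      eapply IH; eauto. eapply nodup_child; eauto.
    + destruct (inv_node HN G2 Hk Hu) as [_ E]. rewrite (E Hw).
      destruct (lca_bounds Hmu Hc2 Hl).
      assert (/mu <= 1) by (rewrite <- Rinv_1; apply Rinv_le_contravar; lra).
      assert (W / mu <= W) by (unfold Rdiv; rewrite <- (Rmult_1_r W) at 2;
        apply Rmult_le_compat_l; lra).
      eapply Rle_trans; [|apply Rmax_l]. lra.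
Qed.

End Tree.

Definition Ad := list (R * bool) -> R -> R -> R.
Definition s0 : list (R * bool) := [(0, true); (1, true)].
Definition arr (s : list (R * bool)) := map fst (filter (fun e => snd e) s).

Fixpoint build (A : Ad) (k : nat) : list (R * bool) * R * R :=
  match k with
  | O => (s0, 0, 1)
  | S k' =>
    let '(s, p, q) := build A k' in
    let m := (p + q) / 2 in
    let s1 := s ++ [(m, true)] in
    if Rle_dec (A s p q) (A s1 p m) then (s1 ++ [(q, false)], p, m)
    else (s1 ++ [(p, false)], m, q)
  end.

Lemma alive_t (s : list (R * bool)) v x : alive (s ++ [(v, true)]) x <-> x = v \/ alive s x.
Proof. unfold alive. rewrite rev_app_distr. simpl. tauto. Qed.

Lemma alive_f (s : list (R * bool)) v x : alive (s ++ [(v, false)]) x <-> x <> v /\ alive s x.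
Proof. unfold alive. rewrite rev_app_distr. simpl. tauto. Qed.

Definition w3 (s : list (R * bool)) := forall t, exists a b c : R,
  forall x, alive (firstn t s) x -> x = a \/ x = b \/ x = c.

Lemma w3_snoc s e : w3 s -> (exists a b c : R, forall x, alive (s ++ [e]) x -> x = a \/ x = b \/ x = c) ->
  w3 (s ++ [e]).
Proof.
  intros H1 H2 t. rewrite firstn_app. destruct (t - length s)%nat eqn:Et.
  - simpl. rewrite app_nil_r. apply H1.
  - simpl. rewrite firstn_all2 by lia. destruct n; apply H2.
Qed.

Lemma len3 (l : list R) a b c : NoDup l -> (forall x, In x l -> x = a \/ x = b \/ x = c) ->
  (length l <= 3)%nat.
Proof.
  intros H1 H2. change 3%nat with (length [a; b; c]). apply NoDup_incl_length; auto.
  intros x Hx. destruct (H2 x Hx) as [E|[E|E]]; subst x; simpl; auto.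
Qed.

Lemma arr_t s v : arr (s ++ [(v, true)]) = arr s ++ [v].
Proof. unfold arr. rewrite filter_app, map_app. reflexivity. Qed.
Lemma arr_f s v : arr (s ++ [(v, false)]) = arr s.
Proof. unfold arr. rewrite filter_app, map_app. simpl. apply app_nil_r. Qed.

Lemma nodup_snoc (l : list R) m : NoDup l -> ~ In m l -> NoDup (l ++ [m]).
Proof.
  intros. apply NoDup_app; auto. repeat constructor; simpl; tauto.
  intros a Ha [<-|[]]. contradiction.
Qed.

Lemma rmax_aux a b c : a <= Rmax b c -> ~ a <= b -> a <= c.
Proof. unfold Rmax. destruct (Rle_dec b c); lra. Qed.

Lemma A_ultra (A : Ad) : strict_online_hst_embedding A -> forall s p q m,
  alive s p -> alive s q -> alive s m -> A s p q <= Rmax (A s p m) (A s m q).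
Proof.
  intros [Hh _] s p q m Hp Hq Hm.
  destruct (Hh s) as [Hne|[mu [t [Hmu [Hwf [HN [Hl Hlca]]]]]]].
  - exfalso. exact (Hne p Hp).
  - eapply ultra; eauto.
Qed.

Definition Inv (A : Ad) k s p q :=
  (p < q /\ q - p = / 2 ^ k) /\
  (forall x, alive s x <-> x = p \/ x = q) /\
  A s0 0 1 <= A s p q /\
  (NoDup (arr s) /\ length (arr s) = S (S k) /\ forall x, In x (arr s) -> x <= p \/ q <= x) /\
  w3 s /\
  (exists tl, s = s0 ++ tl).

Lemma inv_build (A : Ad) : strict_online_hst_embedding A ->
  forall k s p q, build A k = (s, p, q) -> Inv A k s p q.
Proof.
  intros HA. pose proof (A_ultra HA) as HU. destruct HA as [_ Hst].
  induction k as [|k IH]; intros s p q E.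
  - simpl in E. injection E as <- <- <-. unfold Inv. split; [|split; [|split; [|split; [|split]]]].
    + simpl. rewrite Rinv_1. lra.
    + intros x. unfold alive. simpl. intuition.
    + lra.
    + simpl. split; [|split; [reflexivity|]].
      * constructor; [simpl; intros [H|[]]; lra|]. constructor; [simpl; tauto|constructor].
      * intros x [<-|[<-|[]]]; lra.
    + intros [|[|t]]; exists 0, 1, 1; intros x; unfold alive, s0; simpl; [tauto|tauto|destruct t; simpl; tauto].
    + exists []. rewrite app_nil_r. reflexivity.
  - simpl in E. destruct (build A k) as [[s' p'] q'] eqn:E'.
    destruct (IH _ _ _ eq_refl) as [[Hpq Hd] [Hal [HA0 [[HN [Hlen Hout]] [Hw [tl Htl]]]]]].
    set (m := (p' + q') / 2) in *.
    assert (Hpm : p' < m) by (unfold m; lra).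
    assert (Hmq : m < q') by (unfold m; lra).
    assert (Hal1 : forall x, alive (s' ++ [(m, true)]) x <-> x = m \/ x = p' \/ x = q').
    { intros x. rewrite alive_t, Hal. tauto. }
    assert (Hp1 : alive (s' ++ [(m, true)]) p') by (apply Hal1; auto).
    assert (Hq1 : alive (s' ++ [(m, true)]) q') by (apply Hal1; auto).
    assert (Hm1 : alive (s' ++ [(m, true)]) m) by (apply Hal1; auto).
    assert (Heq : A (s' ++ [(m, true)]) p' q' = A s' p' q').
    { apply Hst; auto; apply Hal; auto. }
    pose proof (HU _ _ _ _ Hp1 Hq1 Hm1) as Hu.
    assert (Hnin : ~ In m (arr s')).
    { intro H. destruct (Hout _ H); lra. }
    assert (Hw1 : w3 (s' ++ [(m, true)])).
    { apply w3_snoc; auto. exists m, p', q'. intros x Hx. apply Hal1 in Hx. tauto. }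
    assert (Hd' : m - p' = / 2 ^ S k /\ q' - m = / 2 ^ S k).
    { simpl. assert (0 < 2 ^ k) by (apply pow_lt; lra).
      replace (m - p') with ((q' - p') / 2) by (unfold m; field).
      replace (q' - m) with ((q' - p') / 2) by (unfold m; field).
      rewrite Hd. split; field; lra. }
    destruct (Rle_dec (A s' p' q') (A (s' ++ [(m, true)]) p' m)) as [Hle|Hnle];
      injection E as <- <- <-.
    + unfold Inv. split; [|split; [|split; [|split; [|split]]]].
      * split; [lra| tauto].
      * intros x. rewrite alive_f, Hal1. split; [intros [H1 H2]; intuition|].
        intros [->| ->]; split; try lra; tauto.
      * rewrite (Hst _ _ _ _ Hp1 Hm1); [lra| |]; apply alive_f; split; auto; lra.
      * rewrite arr_f, arr_t. split; [apply nodup_snoc; auto|split].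
        -- rewrite length_app, Hlen. simpl. lia.
        -- intros x Hx. apply in_app_or in Hx. destruct Hx as [Hx|[<-|[]]]; [|lra].
           destruct (Hout _ Hx); lra.
      * apply w3_snoc; auto. exists p', m, m. intros x Hx. apply alive_f in Hx.
        destruct Hx as [H1 H2]. apply Hal1 in H2. intuition.
      * exists (tl ++ [(m, true)] ++ [(q', false)]). rewrite Htl, !app_assoc. reflexivity.
    + assert (Hc : A s' p' q' <= A (s' ++ [(m, true)]) m q') by (eapply rmax_aux; [rewrite <- Heq; exact Hu| exact Hnle]).
      unfold Inv. split; [|split; [|split; [|split; [|split]]]].
      * split; [lra| tauto].
      * intros x. rewrite alive_f, Hal1. split; [intros [H1 H2]; intuition|].
        intros [->| ->]; split; try lra; tauto.
      * rewrite (Hst _ _ _ _ Hm1 Hq1); [lra| |]; apply alive_f; split; auto; lra.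
      * rewrite arr_f, arr_t. split; [apply nodup_snoc; auto|split].
        -- rewrite length_app, Hlen. simpl. lia.
        -- intros x Hx. apply in_app_or in Hx. destruct Hx as [Hx|[<-|[]]]; [|lra].
           destruct (Hout _ Hx); lra.
      * apply w3_snoc; auto. exists m, q', q'. intros x Hx. apply alive_f in Hx.
        destruct Hx as [H1 H2]. apply Hal1 in H2. intuition.
      * exists (tl ++ [(m, true)] ++ [(p', false)]). rewrite Htl, !app_assoc. reflexivity.
Qed.

Theorem mainTheorem20 :
  forall n : nat, (2 <= n)%nat ->
  exists (X : Type) (d : X -> X -> R), is_metric d /\
    forall A : list (X * bool) -> X -> X -> R,
      strict_online_hst_embedding A ->
      exists sigma : list (X * bool),
        width_le sigma 3 /\ n_points_arrive sigma n /\
        distortion_ge d A sigma (2 ^ (n - 2)).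
Proof.
  intros n Hn. exists R, (fun u v => Rabs (u - v)). split.
  - split; [|split; [|split]].
    + intros x. rewrite Rminus_diag. apply Rabs_R0.
    + intros x y H. destruct (Req_dec (x - y) 0) as [E|E]; [lra|].
      exfalso. exact (Rabs_no_R0 _ E H).
    + intros x y. apply Rabs_minus_sym.
    + intros x y z. replace (x - z) with ((x - y) + (y - z)) by ring. apply Rabs_triang.
  - intros A HA. destruct (build A (n - 2)) as [[s p] q] eqn:E.
    destruct (inv_build HA E) as [[Hpq Hd] [Hal [HA0 [[HN [Hlen Hout]] [Hw [tl Htl]]]]]].
    exists s. split; [|split].
    + intros t l Hl Hin. destruct (Hw t) as [a [b [c H]]].
      apply (len3 (a:=a) (b:=b) (c:=c)); auto.
    + split; [|exact HN]. unfold arr in Hlen. rewrite Hlen. lia.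
    + intros c lam Hc H.
      assert (H0 := H 2%nat 0 1). assert (H1 := H (length s) p q).
      rewrite firstn_all in H1.
      assert (Hf : firstn 2 s = s0) by (rewrite Htl; reflexivity).
      rewrite Hf in H0.
      destruct H0 as [H0 _]; [unfold alive, s0; simpl; tauto|unfold alive, s0; simpl; tauto|].
      destruct H1 as [_ H1]; [apply Hal; auto|apply Hal; auto|].
      rewrite Rabs_left in H0 by lra. replace (- (0 - 1)) with 1 in H0 by ring.
      rewrite Rabs_left in H1 by lra. replace (- (p - q)) with (q - p) in H1 by ring.
      rewrite Hd in H1.
      assert (Hcm : c * A s0 0 1 <= c * A s p q) by (apply Rmult_le_compat_l; lra).
      set (P := 2 ^ (n - 2)) in *.
      assert (HP : 0 < P) by (apply pow_lt; lra).
      assert (Hl1 : 1 <= lam * / P) by lra.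
      apply Rmult_le_compat_r with (r := P) in Hl1; [|lra].
      rewrite Rmult_assoc, Rinv_l in Hl1 by lra. lra.
Qed.
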